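(* Under the same setting as Lemma 2.8 ($c\ge0$, $d\in\{0,1,2,\dots\}$, $\lambda>0$, $q=e^{-\lambda/N}$, $\mathsf{s}=e^{-\lambda}$, fixed integers $p\ge1$, $0\le i\le p$), as $N\to\infty$, $$\sum_{j=0}^{N-1}f_i^{(c,d)}(j)=\Big(\frac{N}{\lambda}\Big)^{p+1}\frac{1}{i!(p-i)!}\Big(\mathcal{B}_{i,0}+\mathcal{B}_{i,1}\frac{\lambda}{N}+O(N^{-2})\Big),$$ where $\mathcal{B}_{i,0}=\lambda\mathcal{A}_{i,0}$ and $\mathcal{B}_{i,1}=\lambda\big(\mathcal{A}^{(1)}_{i,1}+\mathcal{A}^{(2)}_{i,1}+\mathcal{A}^{(3)}_{i,1}\big)-\frac12(1-\mathsf{s}^{c+1})^i(1-\mathsf{s})^{p-i}\mathsf{s}^{p+c(p-i)}+\frac12(1-\mathsf{s}^c)^p\delta_{i,p}$.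
   Context: For real $x$ and integer $m\ge0$ define $\begin{bmatrix} x\\ m\end{bmatrix}_q=\prod_{k=1}^{m}\frac{1-q^{x-m+k}}{1-q^{k}}$. For real $y\ge0$, $f_i^{(c,d)}(y)=q^{(cN+d)(p-i)+py}\begin{bmatrix} cN+d+y\\ i\end{bmatrix}_q\begin{bmatrix} p-i+y\\ p-i\end{bmatrix}_q$. The constants are $\mathcal{A}_{i,0}=\mathsf{s}^{c(p-i)}\int_0^1\mathsf{s}^{pt}(1-\mathsf{s}^t)^{p-i}(1-\mathsf{s}^{c+t})^i\,dt$, $\mathcal{A}^{(1)}_{i,1}=\mathsf{s}^{c(p-i+1)}\frac{i(2d-i+1)}{2}\int_0^1\mathsf{s}^{(p+1)t}(1-\mathsf{s}^t)^{p-i}(1-\mathsf{s}^{c+t})^{i-1}\,dt$, $\mathcal{A}^{(2)}_{i,1}=\mathsf{s}^{c(p-i)}\frac{(p-i)(p-i+1)}{2}\int_0^1\mathsf{s}^{(p+1)t}(1-\mathsf{s}^t)^{p-i-1}(1-\mathsf{s}^{c+t})^{i}\,dt$, $\mathcal{A}^{(3)}_{i,1}=\frac{4di+2i^2+p-4dp-2ip+p^2}{4}\mathcal{A}_{i,0}$. $\delta$ is the Kronecker delta. *)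

(* Defs.v *)
From Stdlib Require Import Reals Lra.
From Coquelicot Require Import Coquelicot.
Open Scope R_scope.

Definition rpow (a x : R) : R := Rpower a x.

(* prodR n f = f 1 * f 2 * ... * f n ; sumR n f = f 0 + ... + f (n-1) *)
Fixpoint prodR (n : nat) (f : nat -> R) : R :=
  match n with O => 1 | S n' => prodR n' f * f (S n') end.
Fixpoint sumR (n : nat) (f : nat -> R) : R :=
  match n with O => 0 | S n' => sumR n' f + f n' end.

Definition qbinom (q x : R) (m : nat) : R :=
  prodR m (fun k => (1 - rpow q (x - INR m + INR k)) / (1 - rpow q (INR k))).

Definition fcd (lam c : R) (d p i N : nat) (y : R) : R :=
  let q := exp (- lam / INR N) in
  let cNd := c * INR N + INR d in
  rpow q (cNd * INR (p - i) + INR p * y)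
  * qbinom q (cNd + y) i * qbinom q (INR (p - i) + y) (p - i).

Definition A_i0 (lam c : R) (p i : nat) : R :=
  let s := exp (- lam) in
  rpow s (c * INR (p - i)) *
  RInt (fun t => rpow s (INR p * t) * (1 - rpow s t) ^ (p - i)
                 * (1 - rpow s (c + t)) ^ i) 0 1.

Definition A1_i1 (lam c : R) (d p i : nat) : R :=
  let s := exp (- lam) in
  rpow s (c * (INR p - INR i + 1)) * (INR i * (2 * INR d - INR i + 1) / 2) *
  RInt (fun t => rpow s ((INR p + 1) * t) * (1 - rpow s t) ^ (p - i)
                 * (1 - rpow s (c + t)) ^ (i - 1)) 0 1.

(* when i = p the coefficient (p-i)(p-i+1)/2 vanishes; the truncated
   exponent (p-i-1)%nat is then irrelevant *)
Definition A2_i1 (lam c : R) (p i : nat) : R :=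
  let s := exp (- lam) in
  rpow s (c * INR (p - i)) * ((INR p - INR i) * (INR p - INR i + 1) / 2) *
  RInt (fun t => rpow s ((INR p + 1) * t) * (1 - rpow s t) ^ (p - i - 1)
                 * (1 - rpow s (c + t)) ^ i) 0 1.

Definition A3_i1 (lam c : R) (d p i : nat) : R :=
  (4 * INR d * INR i + 2 * INR i ^ 2 + INR p - 4 * INR d * INR p
   - 2 * INR i * INR p + INR p ^ 2) / 4 * A_i0 lam c p i.

Definition kdelta (a b : nat) : R := if Nat.eqb a b then 1 else 0.

Definition B_i0 (lam c : R) (p i : nat) : R := lam * A_i0 lam c p i.

Definition B_i1 (lam c : R) (d p i : nat) : R :=
  let s := exp (- lam) in
  lam * (A1_i1 lam c d p i + A2_i1 lam c p i + A3_i1 lam c d p i)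
  - / 2 * (1 - rpow s (c + 1)) ^ i * (1 - s) ^ (p - i)
        * rpow s (INR p + c * INR (p - i))
  + / 2 * (1 - rpow s c) ^ p * kdelta i p.

(* Main.v *)
Require Import Defs.
From Stdlib Require Import Reals Arith Lra Lia List.
From Coquelicot Require Import Coquelicot.
Open Scope R_scope.

Lemma exp_bound1 y : Rabs y <= /2 -> Rabs (exp y - 1 - y) <= 2 * y^2.
Proof.
  intros Hy. pose proof (exp_ineq1_le y) as H1. pose proof (exp_ineq1_le (-y)) as H2.
  assert (Hy2 : -/2 <= y <= /2) by (apply Rabs_le_between in Hy; lra).
  assert (He : exp y * exp (-y) = 1) by (rewrite <- exp_plus; replace (y + -y) with 0 by ring; apply exp_0).
  assert (Hp : 0 < exp y) by apply exp_pos.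
  rewrite Rabs_right by lra.
  assert (exp y * (1 - y) <= 1) by nra.
  nra.
Qed.

Lemma Mbound x : 0 <= x -> 0 <= 1 - exp (-x) * (1 + x) <= x^2.
Proof.
  intros Hx. destruct (Req_dec x 0) as [->|Hx0].
  { rewrite Ropp_0, exp_0. lra. }
  destruct (MVT_cor2 (fun t => 1 - exp (-t) * (1 + t)) (fun t => t * exp (-t)) 0 x)
    as [z [Hz1 Hz2]]; [lra| |].
  { intros z _. apply is_derive_Reals. auto_derive; auto. ring. }
  rewrite Ropp_0, exp_0 in Hz1.
  assert (0 < exp (-z)) by apply exp_pos.
  assert (exp (-z) <= 1) by (rewrite <- exp_0; apply Rlt_le; apply exp_increasing; lra).
  assert (0 <= z * exp (-z) <= x) by (split; nra).
  split; nra.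
Qed.

Lemma Nbound x : 0 <= x -> 0 <= x/2 - 1 + (1 + x/2) * exp (-x) <= x^3/2.
Proof.
  intros Hx. destruct (Req_dec x 0) as [->|Hx0].
  { rewrite Ropp_0, exp_0. lra. }
  destruct (MVT_cor2 (fun t => t/2 - 1 + (1 + t/2) * exp (-t))
              (fun t => (1 - exp (-t) * (1 + t))/2) 0 x) as [z [Hz1 Hz2]]; [lra| |].
  { intros z _. apply is_derive_Reals. auto_derive; auto. field. }
  rewrite Ropp_0, exp_0 in Hz1.
  pose proof (Mbound z ltac:(lra)) as HM.
  assert (0 <= (1 - exp (-z) * (1 + z)) / 2 <= x^2/2) by (split; nra).
  split; nra.
Qed.

Definition psi (a h : R) : R := h / (1 - exp (- (h * a))).

Lemma one_m_exp_pos x : 0 < x -> 0 < 1 - exp (-x).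
Proof. intros. assert (exp (-x) < 1) by (rewrite <- exp_0; apply exp_increasing; lra). lra. Qed.

Lemma psi_bound a h : 0 < a -> 0 < h -> h * a <= 1 ->
  Rabs (psi a h - / a - h / 2) <= a * h^2.
Proof.
  intros Ha Hh Hx. unfold psi. set (x := h * a) in *.
  assert (Hx0 : 0 < x) by (unfold x; nra).
  pose proof (Nbound x ltac:(lra)) as HN.
  pose proof (exp_ineq1_le x) as H1.
  assert (HE : exp x * exp (-x) = 1) by (rewrite <- exp_plus; replace (x + -x) with 0 by ring; apply exp_0).
  set (E := exp (-x)) in *.
  assert (0 < E) by apply exp_pos.
  assert (HE2 : E * (1 + x) <= 1) by nra.
  assert (HD : x / 2 <= 1 - E) by nra.
  assert (Heq : h / (1 - E) - / a - h / 2 = (x/2 - 1 + (1 + x/2) * E) / (a * (1 - E))).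
  { unfold x. field. split; lra. }
  rewrite Heq. rewrite Rabs_right.
  2:{ apply Rle_ge. apply Rdiv_le_0_compat; [lra| nra]. }
  apply Rle_trans with ((x^3/2) / (a * (x/2))).
  { unfold Rdiv. apply Rmult_le_compat; try lra.
    - apply Rlt_le, Rinv_0_lt_compat; nra.
    - apply Rinv_le_contravar; nra. }
  replace (a * h^2) with (x^2 / a) by (unfold x; field; lra).
  right. field. lra.
Qed.

Definition Exp1 (F : R -> R) (x0 x1 : R) := exists C d, 0 < d /\
  forall h, 0 < h <= d -> Rabs (F h - x0 - x1 * h) <= C * h^2.

Lemma Exp1_ext F G x0 x1 : (forall h, 0 < h -> F h = G h) -> Exp1 F x0 x1 -> Exp1 G x0 x1.
Proof.
  intros E [C [d [Hd H]]]. exists C, d. split; auto. intros h Hh. rewrite <- E by lra. auto.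
Qed.

Lemma Exp1_eq F x0 x1 y0 y1 : Exp1 F x0 x1 -> x0 = y0 -> x1 = y1 -> Exp1 F y0 y1.
Proof. intros H -> ->. auto. Qed.

Lemma Exp1_const k : Exp1 (fun _ => k) k 0.
Proof. exists 0, 1. split; [lra|]. intros h Hh. replace (k - k - 0 * h) with 0 by ring.
  rewrite Rabs_R0. lra. Qed.

Lemma Exp1_plus F G x0 x1 y0 y1 : Exp1 F x0 x1 -> Exp1 G y0 y1 ->
  Exp1 (fun h => F h + G h) (x0 + y0) (x1 + y1).
Proof.
  intros [C1 [d1 [Hd1 H1]]] [C2 [d2 [Hd2 H2]]].
  exists (C1 + C2), (Rmin d1 d2). split; [apply Rmin_pos; auto|].
  intros h Hh. assert (h <= d1) by (eapply Rle_trans; [apply Hh| apply Rmin_l]).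
  assert (h <= d2) by (eapply Rle_trans; [apply Hh| apply Rmin_r]).
  specialize (H1 h ltac:(lra)). specialize (H2 h ltac:(lra)).
  replace (F h + G h - (x0 + y0) - (x1 + y1) * h) with ((F h - x0 - x1 * h) + (G h - y0 - y1 * h)) by ring.
  eapply Rle_trans; [apply Rabs_triang|]. lra.
Qed.

Lemma Exp1_mult F G x0 x1 y0 y1 : Exp1 F x0 x1 -> Exp1 G y0 y1 ->
  Exp1 (fun h => F h * G h) (x0 * y0) (x1 * y0 + x0 * y1).
Proof.
  intros [C1 [d1 [Hd1 H1]]] [C2 [d2 [Hd2 H2]]].
  exists (Rabs (x1*y1) + (Rabs x0 + Rabs x1) * C2 + C1 * (Rabs y0 + Rabs y1) + C1 * C2),
         (Rmin 1 (Rmin d1 d2)).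
  split; [apply Rmin_pos; [lra|apply Rmin_pos; auto]|].
  intros h Hh.
  assert (h <= 1) by (eapply Rle_trans; [apply Hh| apply Rmin_l]).
  assert (h <= Rmin d1 d2) by (eapply Rle_trans; [apply Hh| apply Rmin_r]).
  assert (h <= d1) by (eapply Rle_trans; [exact H0| apply Rmin_l]).
  assert (h <= d2) by (eapply Rle_trans; [exact H0| apply Rmin_r]).
  specialize (H1 h ltac:(lra)). specialize (H2 h ltac:(lra)).
  set (r1 := F h - x0 - x1 * h) in *. set (r2 := G h - y0 - y1 * h) in *.
  assert (Hh2 : 0 < h^2) by nra.
  assert (0 <= C1) by (pose proof (Rabs_pos r1); nra).
  assert (0 <= C2) by (pose proof (Rabs_pos r2); nra).
  replace (F h * G h - x0 * y0 - (x1 * y0 + x0 * y1) * h) with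
    (x1 * y1 * h^2 + (x0 + x1 * h) * r2 + r1 * (y0 + y1 * h) + r1 * r2) by (unfold r1, r2; ring).
  assert (A1 : Rabs (x1 * y1 * h^2) <= Rabs (x1*y1) * h^2).
  { rewrite Rabs_mult, (Rabs_right (h^2)) by lra. lra. }
  assert (A2 : Rabs ((x0 + x1 * h) * r2) <= (Rabs x0 + Rabs x1) * C2 * h^2).
  { rewrite Rabs_mult. assert (Rabs (x0 + x1 * h) <= Rabs x0 + Rabs x1).
    { eapply Rle_trans; [apply Rabs_triang|]. rewrite Rabs_mult, (Rabs_right h) by lra.
      pose proof (Rabs_pos x1). nra. }
    pose proof (Rabs_pos r2). pose proof (Rabs_pos (x0 + x1*h)). nra. }
  assert (A3 : Rabs (r1 * (y0 + y1 * h)) <= C1 * (Rabs y0 + Rabs y1) * h^2).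
  { rewrite Rabs_mult. assert (Rabs (y0 + y1 * h) <= Rabs y0 + Rabs y1).
    { eapply Rle_trans; [apply Rabs_triang|]. rewrite Rabs_mult, (Rabs_right h) by lra.
      pose proof (Rabs_pos y1). nra. }
    pose proof (Rabs_pos r1). pose proof (Rabs_pos (y0 + y1*h)). nra. }
  assert (A4 : Rabs (r1 * r2) <= C1 * C2 * h^2).
  { rewrite Rabs_mult. pose proof (Rabs_pos r1). pose proof (Rabs_pos r2).
    assert (Rabs r1 * Rabs r2 <= C1 * h^2 * (C2 * h^2)) by (apply Rmult_le_compat; auto).
    assert (h^2 <= 1) by nra. assert (0 <= C1 * C2) by nra.
    assert (C1 * C2 * h^2 * h^2 <= C1 * C2 * h^2 * 1) by (apply Rmult_le_compat_l; nra).
    nra. }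
  eapply Rle_trans; [apply Rabs_triang|].
  eapply Rle_trans; [apply Rplus_le_compat_r; apply Rabs_triang|].
  eapply Rle_trans; [apply Rplus_le_compat_r; apply Rplus_le_compat_r; apply Rabs_triang|].
  lra.
Qed.

Lemma Exp1_exp b : Exp1 (fun h => exp (- h * b)) 1 (- b).
Proof.
  exists (2 * b^2), (/ (2 * (Rabs b + 1))). split.
  { apply Rinv_0_lt_compat. pose proof (Rabs_pos b). lra. }
  intros h Hh. pose proof (Rabs_pos b).
  assert (Hy : Rabs (- h * b) <= /2).
  { rewrite Rabs_mult, Rabs_Ropp, Rabs_right by lra.
    apply Rle_trans with (/ (2 * (Rabs b + 1)) * (Rabs b + 1)).
    - apply Rmult_le_compat; lra.
    - right. field. lra. }
  pose proof (exp_bound1 _ Hy) as HH.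
  replace (exp (- h * b) - 1 - - b * h) with (exp (- h * b) - 1 - (- h * b)) by ring.
  eapply Rle_trans; [apply HH|].
  assert (b^2 <= (Rabs b)^2) by (rewrite pow2_abs; lra).
  assert (Hb : (- h * b)^2 = h^2 * b^2) by ring. rewrite Hb.
  assert (h * Rabs b <= /2).
  { apply Rle_trans with (/ (2 * (Rabs b + 1)) * (Rabs b + 1)).
    - apply Rmult_le_compat; lra.
    - right. field. lra. }
  nra.
Qed.

Lemma Exp1_psi a : 0 < a -> Exp1 (psi a) (/ a) (/ 2).
Proof.
  intros Ha. exists a, (/ a). split; [apply Rinv_0_lt_compat; auto|].
  intros h Hh.
  replace (psi a h - / a - / 2 * h) with (psi a h - / a - h / 2) by (unfold Rdiv; ring).
  apply psi_bound; try lra.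
  replace 1 with (/ a * a) by (field; lra). apply Rmult_le_compat_r; lra.
Qed.

Record mono := Mono { mc : R; ma : nat; mb : R }.
Definition evm (m : mono) (u h : R) := mc m * u ^ ma m * exp (- h * mb m).
Definition eval (l : list mono) (u h : R) : R :=
  fold_right (fun m acc => evm m u h + acc) 0 l.
Definition mmul m1 m2 := Mono (mc m1 * mc m2) (ma m1 + ma m2) (mb m1 + mb m2).
Definition mul l1 l2 := flat_map (fun m1 => map (mmul m1) l2) l1.
Definition Dm m := Mono (- mb m * mc m) (ma m) (mb m).
Definition Dl l := map Dm l.
Fixpoint prodL (n : nat) (F : nat -> list mono) : list mono :=
  match n with O => Mono 1 0 0 :: nil | S n' => mul (prodL n' F) (F (S n')) end.

Lemma eval_app l1 l2 u h : eval (l1 ++ l2) u h = eval l1 u h + eval l2 u h.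
Proof. induction l1; simpl; [ring|]. unfold eval in *. simpl. rewrite IHl1. ring. Qed.

Lemma evm_mmul m1 m2 u h : evm (mmul m1 m2) u h = evm m1 u h * evm m2 u h.
Proof.
  unfold evm, mmul; simpl. rewrite pow_add.
  replace (- h * (mb m1 + mb m2)) with (- h * mb m1 + - h * mb m2) by ring.
  rewrite exp_plus. ring.
Qed.

Lemma eval_map_mmul m l u h : eval (map (mmul m) l) u h = evm m u h * eval l u h.
Proof. induction l; simpl; [ring|]. unfold eval in *; simpl. rewrite IHl, evm_mmul. ring. Qed.

Lemma eval_mul l1 l2 u h : eval (mul l1 l2) u h = eval l1 u h * eval l2 u h.
Proof.
  induction l1; simpl; [unfold eval; simpl; ring|].
  unfold mul in *. simpl. rewrite eval_app, eval_map_mmul, IHl1. unfold eval; simpl. ring.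
Qed.

Lemma evm_Dm m u h : evm (Dm m) u h = - mb m * evm m u h.
Proof. unfold evm, Dm; simpl. ring. Qed.

Lemma Dl_app l1 l2 : Dl (l1 ++ l2) = Dl l1 ++ Dl l2.
Proof. apply map_app. Qed.

Lemma eval_Dl l u h : eval (Dl l) u h = fold_right (fun m acc => - mb m * evm m u h + acc) 0 l.
Proof. induction l; simpl; auto. unfold eval in *; simpl. rewrite IHl, evm_Dm. auto. Qed.

Lemma eval_Dl_map_mmul m l u h :
  eval (Dl (map (mmul m) l)) u h = eval (Dl (m :: nil)) u h * eval l u h + evm m u h * eval (Dl l) u h.
Proof.
  rewrite !eval_Dl. induction l; simpl; [ring|]. rewrite IHl, evm_mmul. simpl. ring.
Qed.

Lemma eval_Dl_mul l1 l2 u h : eval (Dl (mul l1 l2)) u h =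
  eval (Dl l1) u h * eval l2 u h + eval l1 u h * eval (Dl l2) u h.
Proof.
  induction l1; simpl; [unfold eval; simpl; ring|].
  unfold mul in *. simpl. rewrite Dl_app, eval_app, eval_Dl_map_mmul, IHl1.
  unfold Dl, eval; simpl. ring.
Qed.

Lemma eval_prodL n F u h : eval (prodL n F) u h = prodR n (fun k => eval (F k) u h).
Proof.
  induction n; simpl.
  - unfold eval, evm; simpl. rewrite Rmult_0_r, exp_0. ring.
  - rewrite eval_mul, IHn. auto.
Qed.

Lemma prodR_const n w : prodR n (fun _ => w) = w ^ n.
Proof. induction n; simpl; auto. rewrite IHn. ring. Qed.

Lemma eval_Dl_prodL n F u w z (m : nat -> R) :
  (forall k, eval (F k) u 0 = w) -> (forall k, eval (Dl (F k)) u 0 = m k * z) ->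
  eval (Dl (prodL n F)) u 0 = sumR n (fun k => m (S k)) * z * w ^ (n - 1).
Proof.
  intros HF HD. induction n.
  - simpl. unfold Dl, eval, evm; simpl. ring.
  - assert (Hp : forall n, prodR n (fun k => eval (F k) u 0) = w ^ n).
    { clear IHn. intros n'; induction n'; simpl; auto. rewrite IHn', HF. ring. }
    simpl prodL. rewrite eval_Dl_mul, IHn, eval_prodL, HF, HD, Hp. simpl sumR.
    destruct n.
    + simpl. ring.
    + replace (S (S n) - 1)%nat with (S n) by lia. replace (S n - 1)%nat with n by lia.
      simpl. ring.
Qed.

Lemma exp_pow x n : exp x ^ n = exp (INR n * x).
Proof.
  induction n. { simpl. rewrite Rmult_0_l, exp_0. auto. }
  rewrite <- tech_pow_Rmult, IHn, <- exp_plus, S_INR. f_equal. ring.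
Qed.

Lemma sumR_plus N f g : sumR N (fun j => f j + g j) = sumR N f + sumR N g.
Proof. induction N; simpl; [ring|]. rewrite IHN. ring. Qed.
Lemma sumR_scal N k f : sumR N (fun j => k * f j) = k * sumR N f.
Proof. induction N; simpl; [ring|]. rewrite IHN. ring. Qed.
Lemma sumR_ext N f g : (forall j, f j = g j) -> sumR N f = sumR N g.
Proof. intros E; induction N; simpl; auto. rewrite IHN, E. auto. Qed.
Lemma sumR_zero N : sumR N (fun _ => 0) = 0.
Proof. induction N; simpl; [ring|]. rewrite IHN. ring. Qed.
Lemma sumR_geo N r : sumR N (fun j => r ^ j) * (1 - r) = 1 - r ^ N.
Proof. induction N; simpl; [ring|]. rewrite Rmult_plus_distr_r, IHN. ring. Qed.

Definition Sfun (lam : R) (l : list mono) (h : R) : R :=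
  fold_right (fun m acc => mc m * exp (- h * mb m) * (1 - exp (- lam * INR (ma m)))
                            * psi (INR (ma m)) h + acc) 0 l.

Definition posa (l : list mono) := List.Forall (fun m => (1 <= ma m)%nat) l.

Lemma geo_exp lam h N a : 0 < h -> h * INR N = lam -> (1 <= a)%nat ->
  h * sumR N (fun j => exp (- h * INR j) ^ a) = (1 - exp (- lam * INR a)) * psi (INR a) h.
Proof.
  intros Hh HN Ha.
  assert (Ha' : 0 < INR a) by (apply lt_0_INR; lia).
  assert (E : forall j, exp (- h * INR j) ^ a = exp (- (h * INR a)) ^ j).
  { intros j. rewrite !exp_pow. f_equal. ring. }
  assert (Hs : sumR N (fun j => exp (- h * INR j) ^ a) = sumR N (fun j => exp (- (h * INR a)) ^ j)).
  { clear - E. induction N; simpl; auto. rewrite IHN, E. auto. }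
  rewrite Hs. pose proof (sumR_geo N (exp (- (h * INR a)))) as G.
  pose proof (one_m_exp_pos (h * INR a) ltac:(nra)) as P.
  unfold psi. rewrite exp_pow in G.
  replace (INR N * - (h * INR a)) with (- lam * INR a) in G by (rewrite <- HN; ring).
  rewrite <- G. field. lra.
Qed.

Lemma sum_eval lam l h N : 0 < h -> h * INR N = lam -> posa l ->
  h * sumR N (fun j => eval l (exp (- h * INR j)) h) = Sfun lam l h.
Proof.
  intros Hh HN Hl. induction l as [|m l IH].
  - unfold eval; simpl. rewrite sumR_zero. ring.
  - pose proof (Forall_inv Hl) as Hm; pose proof (Forall_inv_tail Hl) as Hl'.
    change (h * sumR N (fun j => evm m (exp (- h * INR j)) h + eval l (exp (- h * INR j)) h) =
       mc m * exp (- h * mb m) * (1 - exp (- lam * INR (ma m))) * psi (INR (ma m)) h + Sfun lam l h).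
    rewrite sumR_plus, Rmult_plus_distr_l, IH by auto. simpl in Hm.
    unfold evm.
    assert (sumR N (fun j => mc m * exp (- h * INR j) ^ ma m * exp (- h * mb m)) =
            mc m * exp (- h * mb m) * sumR N (fun j => exp (- h * INR j) ^ ma m)).
    { rewrite <- sumR_scal. clear. induction N; simpl; auto. rewrite IHN. ring. }
    rewrite H.
    transitivity (mc m * exp (- h * mb m) * (h * sumR N (fun j => exp (- h * INR j) ^ ma m)) + Sfun lam l h); [ring|].
    rewrite (geo_exp lam h N (ma m)) by auto. ring.
Qed.

Definition A0f (lam : R) (l : list mono) : R :=
  fold_right (fun m acc => mc m * (1 - exp (- lam * INR (ma m))) / INR (ma m) + acc) 0 l.
Definition A1f (lam : R) (l : list mono) : R :=
  fold_right (fun m acc => mc m * (1 - exp (- lam * INR (ma m))) * (/2 - mb m / INR (ma m)) + acc) 0 l.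
Definition Bf (lam : R) (l : list mono) : R :=
  fold_right (fun m acc => mc m * (1 - exp (- lam * INR (ma m))) + acc) 0 l.

Lemma Exp1_Sfun lam l : posa l -> Exp1 (Sfun lam l) (A0f lam l) (A1f lam l).
Proof.
  intros Hl. induction l as [|m l IH]; simpl.
  - apply Exp1_eq with 0 0; auto. apply (Exp1_const 0).
  - pose proof (Forall_inv Hl) as Hm; pose proof (Forall_inv_tail Hl) as Hl'.
    simpl in Hm. assert (Ha' : 0 < INR (ma m)) by (apply lt_0_INR; lia).
    apply Exp1_plus with (F := fun h => mc m * exp (- h * mb m) * (1 - exp (- lam * INR (ma m))) * psi (INR (ma m)) h); auto.
    set (k := mc m * (1 - exp (- lam * INR (ma m)))).
    eapply Exp1_eq; [eapply Exp1_ext;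
      [|apply Exp1_mult; [apply (Exp1_const k)|apply Exp1_mult; [apply (Exp1_exp (mb m))| apply (Exp1_psi _ Ha')]]]| |].
    + intros h _. simpl. unfold k. ring.
    + simpl. unfold k. field. lra.
    + simpl. unfold k. field. lra.
Qed.

Lemma is_RInt_evm lam m : 0 < lam -> (1 <= ma m)%nat ->
  is_RInt (fun t => evm m (exp (- lam * t)) 0) 0 1
          (mc m * (1 - exp (- lam * INR (ma m))) / INR (ma m) / lam).
Proof.
  intros Hl Hm. assert (Ha : 0 < INR (ma m)) by (apply lt_0_INR; lia).
  set (a := INR (ma m)) in *.
  set (F := fun t => - mc m / (lam * a) * exp (- (lam * a) * t)).
  assert (H := is_RInt_derive F (fun t => mc m * exp (- (lam * a) * t)) 0 1).
  replace (mc m * (1 - exp (- lam * a)) / a / lam) with (minus (F 1) (F 0)).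
  2:{ unfold minus, plus, opp; simpl. unfold F. rewrite Rmult_0_r, exp_0.
      replace (- (lam * a) * 1) with (- lam * a) by ring. field. lra. }
  eapply is_RInt_ext; [|apply H].
  - intros x _. cbv beta. unfold evm. rewrite exp_pow. replace (- 0 * mb m) with 0 by ring.
    rewrite exp_0. fold a. replace (a * (- lam * x)) with (- (lam * a) * x) by ring. rewrite Rmult_1_r. reflexivity.
  - intros x _. unfold F. auto_derive; auto. field. lra.
  - intros x _. apply (ex_derive_continuous (fun t => mc m * exp (- (lam * a) * t))). auto_derive. auto.
Qed.

Lemma is_RInt_eval lam l : 0 < lam -> posa l ->
  is_RInt (fun t => eval l (exp (- lam * t)) 0) 0 1 (A0f lam l / lam).
Proof.
  intros Hl Hp. induction l as [|m l IH].
  - unfold eval, A0f; simpl.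
    replace (0 / lam) with (scal (1 - 0) 0).
    + exact (@is_RInt_const R_NormedModule 0 1 0).
    + unfold scal; simpl; unfold mult; simpl. field. lra.
  - pose proof (Forall_inv Hp) as Hm; pose proof (Forall_inv_tail Hp) as Hl'. simpl in Hm.
    specialize (IH Hl').
    pose proof (is_RInt_plus _ _ _ _ _ _ (is_RInt_evm lam m Hl Hm) IH) as H.
    replace (A0f lam (m :: l) / lam) with
      (plus (mc m * (1 - exp (- lam * INR (ma m))) / INR (ma m) / lam) (A0f lam l / lam)).
    + eapply is_RInt_ext; [|apply H]. intros; reflexivity.
    + unfold plus; simpl. unfold A0f; simpl. assert (INR (ma m) <> 0) by (apply not_0_INR; lia). field. lra.
Qed.

Lemma RInt_eval lam l : 0 < lam -> posa l ->
  lam * RInt (fun t => eval l (exp (- lam * t)) 0) 0 1 = A0f lam l.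
Proof.
  intros Hl Hp. rewrite (is_RInt_unique _ _ _ _ (is_RInt_eval lam l Hl Hp)). field. lra.
Qed.

Lemma posa_Dl l : posa l -> posa (Dl l).
Proof. intros H. unfold posa, Dl. apply Forall_map. eapply Forall_impl; [|apply H]. auto. Qed.

Lemma A1f_split lam l : A1f lam l = Bf lam l / 2 + A0f lam (Dl l).
Proof. induction l; simpl; [unfold A1f, Bf, A0f; simpl; field|].
  unfold A1f, Bf, A0f in *; simpl. rewrite IHl. unfold Rdiv. ring. Qed.

Lemma Bf_eval lam l : Bf lam l = eval l 1 0 - eval l (exp (- lam)) 0.
Proof. induction l; simpl; [unfold Bf, eval; simpl; ring|].
  unfold Bf, eval in *; simpl. rewrite IHl. unfold evm. rewrite pow1, exp_pow.
  replace (- 0 * mb a) with 0 by ring. rewrite exp_0.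
  replace (INR (ma a) * - lam) with (- lam * INR (ma a)) by ring. ring. Qed.

Lemma posa_mul l1 l2 : posa l1 -> posa (mul l1 l2).
Proof.
  intros H. induction l1; simpl; auto. unfold mul; simpl.
  pose proof (Forall_inv H) as Hm; pose proof (Forall_inv_tail H) as Hl'. simpl in Hm.
  apply Forall_app. split.
  - apply Forall_map. apply Forall_forall. intros x _. simpl. lia.
  - apply IHl1; auto.
Qed.

Section LL.
Variables (lam c : R) (d p i : nat).

Definition L0 := Mono (exp (- lam * (c * INR (p - i)))) p (INR d * INR (p - i)).
Definition F1 (k : nat) := Mono 1 0 0 :: Mono (- exp (- lam * c)) 1 (INR d - INR i + INR k) :: nil.
Definition F2 (k : nat) := Mono 1 0 0 :: Mono (-1) 1 (INR k) :: nil.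
Definition LL := mul (mul (L0 :: nil) (prodL i F1)) (prodL (p - i) F2).

Lemma eval_F1 k u h : eval (F1 k) u h = 1 - exp (- lam * c) * u * exp (- h * (INR d - INR i + INR k)).
Proof. unfold eval, evm, F1; simpl. rewrite Rmult_0_r, exp_0. ring. Qed.
Lemma eval_F2 k u h : eval (F2 k) u h = 1 - u * exp (- h * INR k).
Proof. unfold eval, evm, F2; simpl. rewrite Rmult_0_r, exp_0. ring. Qed.
Lemma eval_L0 u h : eval (L0 :: nil) u h = exp (- lam * (c * INR (p - i))) * u ^ p * exp (- h * (INR d * INR (p - i))).
Proof. unfold eval, evm, L0; simpl. ring. Qed.

Lemma prodR_ext n f g : (forall k, f k = g k) -> prodR n f = prodR n g.
Proof. intros E; induction n; simpl; auto. rewrite IHn, E. auto. Qed.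

Lemma eval_LL u h : eval LL u h =
  exp (- lam * (c * INR (p - i))) * u ^ p * exp (- h * (INR d * INR (p - i)))
  * prodR i (fun k => 1 - exp (- lam * c) * u * exp (- h * (INR d - INR i + INR k)))
  * prodR (p - i) (fun k => 1 - u * exp (- h * INR k)).
Proof.
  unfold LL. rewrite !eval_mul, !eval_prodL, eval_L0.
  rewrite (prodR_ext i _ _ (fun k => eval_F1 k u h)).
  rewrite (prodR_ext (p - i) _ _ (fun k => eval_F2 k u h)). auto.
Qed.

Lemma eval_LL0 u : eval LL u 0 =
  exp (- lam * (c * INR (p - i))) * u ^ p * (1 - exp (- lam * c) * u) ^ i * (1 - u) ^ (p - i).
Proof.
  rewrite eval_LL, <- !prodR_const. rewrite Ropp_0, Rmult_0_l, exp_0.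
  rewrite (prodR_ext i _ (fun _ => 1 - exp (- lam * c) * u)).
  2:{ intros k. rewrite ?Ropp_0, ?Rmult_0_l, ?exp_0. ring. }
  rewrite (prodR_ext (p - i) _ (fun _ => 1 - u)).
  2:{ intros k. rewrite ?Ropp_0, ?Rmult_0_l, ?exp_0. ring. }
  ring.
Qed.

Lemma eval_DLL0 u : eval (Dl LL) u 0 =
  - (INR d * INR (p - i)) * eval LL u 0
  + exp (- lam * (c * INR (p - i))) * u ^ p *
    (sumR i (fun k => INR d - INR i + INR (S k)) * (exp (- lam * c) * u) * (1 - exp (- lam * c) * u) ^ (i - 1))
    * (1 - u) ^ (p - i)
  + exp (- lam * (c * INR (p - i))) * u ^ p * (1 - exp (- lam * c) * u) ^ i *
    (sumR (p - i) (fun k => INR (S k)) * u * (1 - u) ^ (p - i - 1)).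
Proof.
  rewrite eval_LL0. unfold LL. rewrite !eval_Dl_mul, !eval_mul, !eval_prodL.
  rewrite (eval_Dl_prodL i F1 u (1 - exp (- lam * c) * u) (exp (- lam * c) * u)
             (fun k => INR d - INR i + INR k)).
  2:{ intros k. rewrite eval_F1, Ropp_0, Rmult_0_l, exp_0. ring. }
  2:{ intros k. unfold Dl, eval, evm, F1; simpl. rewrite !Ropp_0, !Rmult_0_l, exp_0. ring. }
  rewrite (eval_Dl_prodL (p - i) F2 u (1 - u) u (fun k => INR k)).
  2:{ intros k. rewrite eval_F2, Ropp_0, Rmult_0_l, exp_0. ring. }
  2:{ intros k. unfold Dl, eval, evm, F2; simpl. rewrite !Ropp_0, !Rmult_0_l, exp_0. ring. }
  rewrite (prodR_ext i _ (fun _ => 1 - exp (- lam * c) * u)).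
  2:{ intros k. rewrite eval_F1, Ropp_0, Rmult_0_l, exp_0. ring. }
  rewrite (prodR_ext (p - i) _ (fun _ => 1 - u)).
  2:{ intros k. rewrite eval_F2, Ropp_0, Rmult_0_l, exp_0. ring. }
  rewrite !prodR_const.
  unfold Dl, eval, evm, L0; simpl. rewrite Ropp_0, !Rmult_0_l, exp_0. ring.
Qed.

Lemma posa_LL : (1 <= p)%nat -> posa LL.
Proof.
  intros Hp. unfold LL. apply posa_mul, posa_mul. constructor; [simpl; lia| constructor].
Qed.

End LL.

Lemma rpow_exp a x : rpow (exp a) x = exp (x * a).
Proof. unfold rpow, Rpower. rewrite ln_exp. auto. Qed.

Lemma prodR_div n f g : prodR n (fun k => f k / g k) = prodR n f / prodR n g.
Proof. induction n; simpl; [field|]. rewrite IHn. unfold Rdiv. rewrite Rinv_mult. ring. Qed.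

Lemma den_pos h n : 0 < h -> 0 < prodR n (fun k => 1 - exp (- h * INR k)).
Proof.
  intros Hh. induction n; cbn [prodR]; [lra|]. apply Rmult_lt_0_compat; auto.
  replace (- h * INR (S n)) with (- (h * INR (S n))) by ring.
  apply one_m_exp_pos. apply Rmult_lt_0_compat; auto. apply lt_0_INR; lia.
Qed.

Definition Den h i p := prodR i (fun k => 1 - exp (- h * INR k)) * prodR (p - i) (fun k => 1 - exp (- h * INR k)).

Lemma fcd_eval lam c d p i N j : (1 <= N)%nat ->
  fcd lam c d p i N (INR j) =
  eval (LL lam c d p i) (exp (- (lam / INR N) * INR j)) (lam / INR N) / Den (lam / INR N) i p.
Proof.
  intros HN. assert (HN' : INR N <> 0) by (apply not_0_INR; lia).
  set (h := lam / INR N).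
  unfold fcd, qbinom. cbv zeta. rewrite !prodR_div. rewrite eval_LL.
  assert (Hq : exp (- lam / INR N) = exp (- h)) by (unfold h; f_equal; field; auto).
  rewrite Hq.
  erewrite (prodR_ext i (fun k => 1 - rpow (exp (- h)) (c * INR N + INR d + INR j - INR i + INR k))
     (fun k => 1 - exp (- lam * c) * exp (- h * INR j) * exp (- h * (INR d - INR i + INR k)))).
  2:{ intros k. rewrite rpow_exp, <- !exp_plus. f_equal. f_equal. unfold h. field. auto. }
  erewrite (prodR_ext i (fun k => 1 - rpow (exp (- h)) (INR k)) (fun k => 1 - exp (- h * INR k))).
  2:{ intros k. rewrite rpow_exp. f_equal. f_equal. ring. }
  erewrite (prodR_ext (p - i) (fun k => 1 - rpow (exp (- h)) (INR (p - i) + INR j - INR (p - i) + INR k))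
     (fun k => 1 - exp (- h * INR j) * exp (- h * INR k))).
  2:{ intros k. rewrite rpow_exp, <- !exp_plus. f_equal. f_equal. ring. }
  erewrite (prodR_ext (p - i) (fun k => 1 - rpow (exp (- h)) (INR k)) (fun k => 1 - exp (- h * INR k))).
  2:{ intros k. rewrite rpow_exp. f_equal. f_equal. ring. }
  rewrite rpow_exp, exp_pow.
  assert (E : exp (((c * INR N + INR d) * INR (p - i) + INR p * INR j) * - h) =
     exp (- lam * (c * INR (p - i))) * exp (INR p * (- h * INR j)) * exp (- h * (INR d * INR (p - i)))).
  { rewrite <- !exp_plus. f_equal. unfold h. field. auto. }
  rewrite E. unfold Den. unfold Rdiv. rewrite Rinv_mult. ring.
Qed.

Lemma rpow_s lam x : rpow (exp (- lam)) x = exp (- lam * x).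
Proof. rewrite rpow_exp. f_equal. ring. Qed.

Lemma exp_nt lam n t : exp (- lam * (INR n * t)) = exp (- lam * t) ^ n.
Proof. rewrite exp_pow. f_equal. ring. Qed.

Lemma exp_ct lam c t : exp (- lam * (c + t)) = exp (- lam * c) * exp (- lam * t).
Proof. rewrite <- exp_plus. f_equal. ring. Qed.

Lemma exp_p1t lam p t : exp (- lam * ((INR p + 1) * t)) = exp (- lam * t) ^ p * exp (- lam * t).
Proof. rewrite <- exp_nt, <- exp_plus. f_equal. ring. Qed.

Lemma ex_RInt_f (f : R -> R) : (forall t, ex_derive f t) -> ex_RInt f 0 1.
Proof.
  intros H. apply (ex_RInt_continuous (V := R_CompleteNormedModule)). intros z _.
  apply (ex_derive_continuous f). auto.
Qed.

Lemma B0_eq lam c d p i : 0 < lam -> (1 <= p)%nat ->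
  B_i0 lam c p i = A0f lam (LL lam c d p i).
Proof.
  intros Hl Hp. unfold B_i0, A_i0. cbv zeta.
  set (P0 := rpow (exp (- lam)) (c * INR (p - i))).
  set (f0 := fun t => rpow (exp (- lam)) (INR p * t) * (1 - rpow (exp (- lam)) t) ^ (p - i) *
              (1 - rpow (exp (- lam)) (c + t)) ^ i).
  assert (HP0 : 0 < P0) by (unfold P0; rewrite rpow_s; apply exp_pos).
  assert (Hpt : forall t, eval (LL lam c d p i) (exp (- lam * t)) 0 = P0 * f0 t).
  { intros t. rewrite eval_LL0. unfold P0, f0. rewrite !rpow_s, exp_nt, exp_ct.
    ring. }
  pose proof (is_RInt_eval lam _ Hl (posa_LL lam c d p i Hp)) as HI.
  assert (HI2 : is_RInt f0 0 1 (/ P0 * (A0f lam (LL lam c d p i) / lam))).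
  { apply (is_RInt_ext (fun t => / P0 * eval (LL lam c d p i) (exp (- lam * t)) 0)).
    - intros t _. match goal with |- ?a = ?b => change (@eq R a b) end.
      rewrite Hpt. field. lra.
    - apply (is_RInt_scal _ _ _ _ _ HI). }
  rewrite (is_RInt_unique _ _ _ _ HI2). field. lra.
Qed.

Lemma exists_eq_R (x : R) : exists y : R, x = y.
Proof. exists x; reflexivity. Qed.

Lemma sum_lin n e f : sumR n (fun k => e + f * INR (S k)) = INR n * e + f * (INR n * (INR n + 1) / 2).
Proof. induction n. { simpl. field. } cbn [sumR]. rewrite IHn, !S_INR. field. Qed.

Lemma B1_eq lam c d p i : 0 < lam -> (1 <= p)%nat -> (i <= p)%nat ->
  B_i1 lam c d p i = A1f lam (LL lam c d p i) + A0f lam (LL lam c d p i) *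
     (sumR i (fun k => INR (S k) / 2) + sumR (p - i) (fun k => INR (S k) / 2)).
Proof.
  intros Hl Hp Hip.
  pose proof (posa_LL lam c d p i Hp) as HP.
  set (X := A0f lam (LL lam c d p i)).
  assert (HA0 : A_i0 lam c p i = X / lam).
  { unfold X. rewrite <- (B0_eq lam c d p i Hl Hp). unfold B_i0. field. lra. }
  rewrite A1f_split, Bf_eval.
  rewrite <- (RInt_eval lam (Dl (LL lam c d p i)) Hl (posa_Dl _ HP)).
  set (s := exp (- lam)).
  set (f1 := fun t => rpow s ((INR p + 1) * t) * (1 - rpow s t) ^ (p - i)
                 * (1 - rpow s (c + t)) ^ (i - 1)).
  set (f2 := fun t => rpow s ((INR p + 1) * t) * (1 - rpow s t) ^ (p - i - 1)
                 * (1 - rpow s (c + t)) ^ i).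
  assert (E1 : ex_RInt f1 0 1).
  { apply ex_RInt_f. intros t. unfold f1, rpow, Rpower. auto_derive. auto. }
  assert (E2 : ex_RInt f2 0 1).
  { apply ex_RInt_f. intros t. unfold f2, rpow, Rpower. auto_derive. auto. }
  set (P0 := exp (- lam * (c * INR (p - i)))).
  set (sg := exp (- lam * c)).
  set (S1 := sumR i (fun k => INR d - INR i + INR (S k))).
  set (S2 := sumR (p - i) (fun k => INR (S k))).
  set (a := - (INR d * INR (p - i))).
  pose proof (is_RInt_eval lam _ Hl HP) as HI0. fold X in HI0.
  assert (HC : is_RInt (fun t => a * eval (LL lam c d p i) (exp (- lam * t)) 0 + (P0 * S1 * sg) * f1 t
                              + (P0 * S2) * f2 t) 0 1
                 (a * (X / lam) + (P0 * S1 * sg) * RInt f1 0 1 + (P0 * S2) * RInt f2 0 1)).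
  { exact (is_RInt_plus _ _ _ _ _ _ (is_RInt_plus _ _ _ _ _ _ (is_RInt_scal _ _ _ a _ HI0)
             (is_RInt_scal _ _ _ (P0 * S1 * sg) _ (RInt_correct _ _ _ E1)))
             (is_RInt_scal _ _ _ (P0 * S2) _ (RInt_correct _ _ _ E2))). }
  assert (HC2 : is_RInt (fun t => eval (Dl (LL lam c d p i)) (exp (- lam * t)) 0) 0 1
                 (a * (X / lam) + (P0 * S1 * sg) * RInt f1 0 1 + (P0 * S2) * RInt f2 0 1)).
  { eapply is_RInt_ext; [|apply HC]. intros t _.
    match goal with |- ?a = ?b => change (@eq R a b) end.
    rewrite eval_DLL0. fold P0 sg S1 S2 a. unfold f1, f2. unfold s. rewrite !rpow_s, exp_p1t, exp_ct.
    fold sg. ring. }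
  rewrite (is_RInt_unique _ _ _ _ HC2).
  unfold B_i1, A1_i1, A2_i1, A3_i1. cbv zeta. rewrite HA0. fold s. fold f1 f2.
  rewrite !eval_LL0. fold P0 sg.
  assert (Hr1 : rpow s (c * (INR p - INR i + 1)) = P0 * sg).
  { unfold s, P0, sg. rewrite rpow_s, minus_INR by auto. rewrite <- exp_plus. f_equal. ring. }
  assert (Hr2 : rpow s (c * INR (p - i)) = P0) by (unfold s, P0; rewrite rpow_s; auto).
  assert (Hr3 : rpow s (c + 1) = sg * s).
  { unfold s, sg. rewrite rpow_s, <- exp_plus. f_equal. ring. }
  assert (Hr4 : rpow s (INR p + c * INR (p - i)) = s ^ p * P0).
  { unfold s, P0. rewrite rpow_s, exp_pow, <- exp_plus. f_equal. ring. }
  assert (Hr5 : rpow s c = sg) by (unfold s, sg; rewrite rpow_s; auto).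
  rewrite Hr1, Hr2, Hr3, Hr4, Hr5.
  assert (HS1 : S1 = INR i * (INR d - INR i) + 1 * (INR i * (INR i + 1) / 2)).
  { unfold S1. rewrite <- sum_lin. apply sumR_ext. intros k. ring. }
  assert (HS2 : S2 = INR (p - i) * 0 + 1 * (INR (p - i) * (INR (p - i) + 1) / 2)).
  { unfold S2. rewrite <- sum_lin. apply sumR_ext. intros k. ring. }
  assert (HS3 : forall n, sumR n (fun k => INR (S k) / 2) = INR n * 0 + / 2 * (INR n * (INR n + 1) / 2)).
  { intros n. rewrite <- sum_lin. apply sumR_ext. intros k. field. }
  rewrite HS1, HS2, !HS3. unfold a. rewrite pow1.
  destruct (Nat.eq_dec i p) as [<-|Hne].
  - unfold kdelta. rewrite Nat.eqb_refl.
    assert (HP0 : P0 = 1) by (unfold P0; rewrite Nat.sub_diag; simpl; rewrite !Rmult_0_r; apply exp_0).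
    rewrite HP0. rewrite Nat.sub_diag. rewrite ?pow_O. replace (INR 0) with 0 by reflexivity. rewrite ?Rmult_1_r. destruct (exists_eq_R (RInt f1 0 1)) as [y1 ->]. destruct (exists_eq_R (RInt f2 0 1)) as [y2 ->]. field. lra.
  - unfold kdelta. replace (Nat.eqb i p) with false by (symmetry; apply Nat.eqb_neq; auto).
    replace ((1 - 1) ^ (p - i)) with 0 by (replace (p - i)%nat with (S (p - i - 1)) by lia; simpl; ring).
    rewrite minus_INR by auto. rewrite ?Rmult_1_r. destruct (exists_eq_R (RInt f1 0 1)) as [y1 ->]. destruct (exists_eq_R (RInt f2 0 1)) as [y2 ->]. field. lra.
Qed.

Lemma Exp1_prodR (F : nat -> R -> R) (m : nat -> R) n :
  (forall k, (1 <= k)%nat -> Exp1 (F k) 1 (m k)) ->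
  Exp1 (fun h => prodR n (fun k => F k h)) 1 (sumR n (fun k => m (S k))).
Proof.
  intros H. induction n.
  - simpl. apply (Exp1_const 1).
  - cbn [prodR sumR]. eapply Exp1_eq.
    + apply Exp1_mult; [apply IHn| apply H; lia].
    + ring.
    + ring.
Qed.

Definition G (k : nat) (h : R) := INR k * psi (INR k) h.

Lemma Exp1_G k : (1 <= k)%nat -> Exp1 (G k) 1 (INR k / 2).
Proof.
  intros Hk. assert (Hk' : 0 < INR k) by (apply lt_0_INR; lia).
  eapply Exp1_eq.
  - apply Exp1_mult; [apply (Exp1_const (INR k))| apply (Exp1_psi _ Hk')].
  - field. lra.
  - field; lra.
Qed.

Lemma prodG n h : 0 < h ->
  prodR n (fun k => G k h) * prodR n (fun k => 1 - exp (- h * INR k)) = INR (fact n) * h ^ n.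
Proof.
  intros Hh. induction n.
  - simpl. ring.
  - cbn [prodR]. 
    assert (Hd : 0 < 1 - exp (- h * INR (S n))).
    { replace (- h * INR (S n)) with (- (h * INR (S n))) by ring.
      apply one_m_exp_pos. apply Rmult_lt_0_compat; auto. apply lt_0_INR; lia. }
    transitivity (prodR n (fun k => G k h) * prodR n (fun k => 1 - exp (- h * INR k)) *
                  (G (S n) h * (1 - exp (- h * INR (S n))))); [ring|].
    rewrite IHn. unfold G, psi.
    replace (- (h * INR (S n))) with (- h * INR (S n)) by ring.
    replace (fact (S n)) with (S n * fact n)%nat by reflexivity.
    rewrite mult_INR. simpl pow. field. lra.
Qed.

Theorem lemma2p9 (c lam : R) (d p i : nat) :
  0 <= c -> 0 < lam -> (1 <= p)%nat -> (i <= p)%nat ->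
  exists C : R, exists N0 : nat, forall N : nat, (N0 <= N)%nat ->
    let K := (INR N / lam) ^ (p + 1) / (INR (fact i) * INR (fact (p - i))) in
    Rabs (sumR N (fun j => fcd lam c d p i N (INR j))
          - K * (B_i0 lam c p i + B_i1 lam c d p i * (lam / INR N)))
    <= K * (C / INR N ^ 2).
Proof.
  intros Hc Hl Hp Hip.
  set (L := LL lam c d p i).
  set (Phi := fun h => Sfun lam L h * (prodR i (fun k => G k h) * prodR (p - i) (fun k => G k h))).
  assert (HE : Exp1 Phi (B_i0 lam c p i) (B_i1 lam c d p i)).
  { eapply Exp1_eq.
    - apply Exp1_mult; [apply Exp1_Sfun, posa_LL; auto|].
      apply Exp1_mult; apply (Exp1_prodR G (fun k => INR k / 2)); apply Exp1_G.
    - rewrite (B0_eq lam c d p i) by auto. fold L. ring.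
    - rewrite (B1_eq lam c d p i) by auto. fold L. ring. }
  destruct HE as [C [dl [Hdl HC]]].
  exists (C * lam ^ 2).
  destruct (archimed_cor1 (dl / lam)) as [N0 [HN0 HN0pos]].
  { apply Rdiv_lt_0_compat; auto. }
  exists N0. intros N HN K.
  assert (HN1 : (1 <= N)%nat) by lia.
  assert (HNr : 0 < INR N) by (apply lt_0_INR; lia).
  assert (HN0r : 0 < INR N0) by (apply lt_0_INR; lia).
  assert (HNN0 : INR N0 <= INR N) by (apply le_INR; auto).
  set (h := lam / INR N).
  assert (Hh : 0 < h) by (unfold h; apply Rdiv_lt_0_compat; auto).
  assert (Hhd : h <= dl).
  { unfold h. apply Rle_trans with (lam / INR N0).
    - unfold Rdiv. apply Rmult_le_compat_l; [lra|]. apply Rinv_le_contravar; auto.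
    - apply Rlt_le. apply Rmult_lt_reg_r with (/ lam). apply Rinv_0_lt_compat; auto.
      replace (lam / INR N0 * / lam) with (/ INR N0) by (field; lra).
      exact HN0. }
  assert (HK : 0 <= K).
  { unfold K. apply Rle_mult_inv_pos.
    - apply pow_le. apply Rlt_le, Rdiv_lt_0_compat; auto.
    - apply Rmult_lt_0_compat; apply lt_0_INR, lt_O_fact. }
  assert (Hkey : sumR N (fun j => fcd lam c d p i N (INR j)) = K * Phi h).
  { rewrite (sumR_ext N _ (fun j => / Den h i p * eval L (exp (- h * INR j)) h)).
    2:{ intros j. rewrite fcd_eval by auto. unfold Rdiv. rewrite Rmult_comm. reflexivity. }
    rewrite sumR_scal.
    pose proof (sum_eval lam L h N Hh ltac:(unfold h; field; lra) (posa_LL lam c d p i Hp)) as SE.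
    pose proof (prodG i h Hh) as G1. pose proof (prodG (p - i) h Hh) as G2.
    pose proof (den_pos h i Hh) as D1. pose proof (den_pos h (p - i) Hh) as D2.
    unfold Phi, K, Den. rewrite <- SE.
    replace (INR N / lam) with (/ h) by (unfold h; field; lra).
    rewrite pow_inv.
    replace (p + 1)%nat with (i + (p - i) + 1)%nat by lia. rewrite !pow_add, pow_1.
    set (D1' := prodR i (fun k => 1 - exp (- h * INR k))) in *.
    set (D2' := prodR (p - i) (fun k => 1 - exp (- h * INR k))) in *.
    set (P1 := prodR i (fun k => G k h)) in *.
    set (P2 := prodR (p - i) (fun k => G k h)) in *.
    set (S := sumR N (fun j => eval L (exp (- h * INR j)) h)).
    assert (HP1 : P1 = INR (fact i) * h ^ i / D1') by (rewrite <- G1; field; lra).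
    assert (HP2 : P2 = INR (fact (p - i)) * h ^ (p - i) / D2') by (rewrite <- G2; field; lra).
    rewrite HP1, HP2.
    assert (F1 : INR (fact i) <> 0) by (apply not_0_INR, fact_neq_0).
    assert (F2 : INR (fact (p - i)) <> 0) by (apply not_0_INR, fact_neq_0).
    assert (H1 : h ^ i <> 0) by (apply pow_nonzero; lra).
    assert (H2 : h ^ (p - i) <> 0) by (apply pow_nonzero; lra).
    field. repeat split; lra. }
  rewrite Hkey.
  replace (K * Phi h - K * (B_i0 lam c p i + B_i1 lam c d p i * h))
    with (K * (Phi h - B_i0 lam c p i - B_i1 lam c d p i * h)) by ring.
  rewrite Rabs_mult, (Rabs_right K) by lra.
  apply Rmult_le_compat_l; auto.
  replace (C * lam ^ 2 / INR N ^ 2) with (C * h ^ 2) by (unfold h; field; lra).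
  apply HC. lra.
Qed.
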